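(* Let $X$ be a $T_1$-space. Then $\overline{\mathrm{F}}(X)\simeq\overline{\mathrm{F}}(\mathcal{O}X)$ and $\mathrm{F}(X)\simeq\mathrm{F}(\mathcal{O}X)$ as posets.
   Context: $\overline{\mathrm{F}}(X)$ is the set of all functions $X\to[-\infty,+\infty]$ and $\mathrm{F}(X)$ the set of all functions $X\to\mathbb{R}$, both ordered pointwise. $\mathcal{O}X$ is the frame of open sets of $X$. For a frame $L$: $\mathbb{Q}$ is the rationals; a sublocale of $L$ is a subset closed under arbitrary meets and such that $x\to s\in S$ for $x\in L$, $s\in S$; $\mathrm{coS}(L)$ is the frame of sublocales ordered by reverse inclusion, with pseudocomplement $^\ast$. The frame $\mathfrak{L}(\overline{\mathbb{IR}})$ is presented by generators $(r,\textsf{---})$, $(\textsf{---},s)$ ($r,s\in\mathbb{Q}$) with relations (r1) $(r,\textsf{---})\wedge(\textsf{---},s)=0$ for $r\ge s$; (r3) $(r,\textsf{---})=\bigvee_{s>r}(s,\textsf{---})$; (r4) $(\textsf{---},s)=\bigvee_{r<s}(\textsf{---},r)$. $\overline{\mathrm{F}}(L)$ is the set of frame homomorphisms $f\colon\mathfrak{L}(\overline{\mathbb{IR}})\to\mathrm{coS}(L)$ with $f(r,\textsf{---})^\ast\le f(\textsf{---},s)$ and $f(\textsf{---},s)^\ast\le f(r,\textsf{---})$ for $r<s$, ordered by $f\le g$ iff $f(r,\textsf{---})\le g(r,\textsf{---})$ and $g(\textsf{---},s)\le f(\textsf{---},s)$; it is a complete lattice with top $\boldsymbol{+\infty}$ ($(r,\textsf{---})\mapsto1$,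 $(\textsf{---},s)\mapsto0$) and bottom $\boldsymbol{-\infty}$ ($(r,\textsf{---})\mapsto0$, $(\textsf{---},s)\mapsto1$). $\mathrm{F}(L)$ is the set of $f\in\overline{\mathrm{F}}(L)$ such that for all $g\in\overline{\mathrm{F}}(L)$, $f\vee g=\boldsymbol{+\infty}\Rightarrow g=\boldsymbol{+\infty}$ and $f\wedge g=\boldsymbol{-\infty}\Rightarrow g=\boldsymbol{-\infty}$. *)

(* Defs.v *)
From HB Require Import structures.
From mathcomp Require Import all_boot all_order all_algebra.
From mathcomp Require Import all_classical all_reals all_analysis.
Set Implicit Arguments. Unset Strict Implicit. Unset Printing Implicit Defensive.
Import Order.TTheory GRing.Theory Num.Theory.
Local Open Scope classical_set_scope.
Local Open Scope ring_scope.

Section FrameOX.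
Variable X : topologicalType.

Definition Opens : set (set X) := [set U | open U].

Definition Omeet (A : set (set X)) : set X :=
  \bigcup_(W in [set W : set X | open W /\ forall U, A U -> W `<=` U]) W.

Definition Oimp (U V : set X) : set X :=
  \bigcup_(W in [set W : set X | open W /\ W `&` U `<=` V]) W.

Definition sublocale (S : set (set X)) : Prop :=
  [/\ S `<=` Opens,
      (forall A : set (set X), A `<=` S -> S (Omeet A)) &
      (forall x s, open x -> S s -> S (Oimp x s))].

Definition coS_le (S T : set (set X)) : Prop := T `<=` S.
Definition coS_bot : set (set X) := Opens.
Definition coS_top : set (set X) := [set setT].
Definition coS_meet (S T : set (set X)) : set (set X) :=
  \bigcap_(U in [set U | sublocale U /\ S `|` T `<=` U]) U.
Definition coS_join (I : Type) (P : set I) (F : I -> set (set X)) : set (set X) :=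
  Opens `&` \bigcap_(i in P) F i.
Definition coS_pc (S : set (set X)) : set (set X) :=
  coS_join [set T | sublocale T /\ coS_meet S T = coS_bot] id.

(* ---- Fbar(OX) ----
   A frame homomorphism f : L(IRbar) -> coS(OX) is (by the universal property of
   the presentation) the same as an assignment of the generators satisfying the
   relations (r1), (r3), (r4).  We represent f by the pair
   (fun r => f(r,---), fun s => f(---,s)). *)
Definition FbarL := ((rat -> set (set X)) * (rat -> set (set X)))%type.

Definition is_FbarL (f : FbarL) : Prop :=
  [/\ (forall r, sublocale (f.1 r)) /\ (forall s, sublocale (f.2 s)),
      (forall r s, s <= r -> coS_meet (f.1 r) (f.2 s) = coS_bot),
      (forall r, f.1 r = coS_join [set s | r < s] f.1),
      (forall s, f.2 s = coS_join [set r | r < s] f.2) &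
      (forall r s, r < s ->
         coS_le (coS_pc (f.1 r)) (f.2 s) /\ coS_le (coS_pc (f.2 s)) (f.1 r))].

Definition FbarL_le (f g : FbarL) : Prop :=
  (forall r, coS_le (f.1 r) (g.1 r)) /\ (forall s, coS_le (g.2 s) (f.2 s)).

Definition FbarL_pinfty : FbarL := (fun _ => coS_top, fun _ => coS_bot).
Definition FbarL_minfty : FbarL := (fun _ => coS_bot, fun _ => coS_top).

Definition FbarL_is_join (f g h : FbarL) : Prop :=
  [/\ is_FbarL h, FbarL_le f h, FbarL_le g h &
      forall k, is_FbarL k -> FbarL_le f k -> FbarL_le g k -> FbarL_le h k].
Definition FbarL_is_meet (f g h : FbarL) : Prop :=
  [/\ is_FbarL h, FbarL_le h f, FbarL_le h g &
      forall k, is_FbarL k -> FbarL_le k f -> FbarL_le k g -> FbarL_le k h].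

Definition is_FL (f : FbarL) : Prop :=
  is_FbarL f /\
  forall g, is_FbarL g ->
    (FbarL_is_join f g FbarL_pinfty -> g = FbarL_pinfty) /\
    (FbarL_is_meet f g FbarL_minfty -> g = FbarL_minfty).

End FrameOX.

Definition poset_iso (A B : Type) (PA : A -> Prop) (leA : A -> A -> Prop)
    (PB : B -> Prop) (leB : B -> B -> Prop) : Prop :=
  exists phi : A -> B,
    [/\ (forall a, PA a -> PB (phi a)),
        (forall b, PB b -> exists2 a, PA a & phi a = b) &
        (forall a a', PA a -> PA a' -> (leA a a' <-> leB (phi a) (phi a')))].

Definition Fbar_le (R : realType) (X : Type) (f g : X -> \bar R) : Prop :=
  forall x, (f x <= g x)%E.
Definition F_le (R : realType) (X : Type) (f g : X -> R) : Prop :=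
  forall x, f x <= g x.

(* Main.v *)
Require Import Defs.
From mathcomp Require Import all_boot all_order all_algebra.
From mathcomp Require Import all_classical all_reals all_analysis.
From mathcomp Require Import lra.
Set Implicit Arguments. Unset Strict Implicit. Unset Printing Implicit Defensive.
Import Order.TTheory GRing.Theory Num.Theory.

Section Frame.
Local Open Scope classical_set_scope.
Variable X : topologicalType.
Implicit Types (A B U V W a b s t p : set X) (S T P : set (set X)).

Lemma Omeet_open (F : set (set X)) : open (Omeet F).
Proof. by apply: bigcup_open => W []. Qed.

Lemma Omeet_lb (F : set (set X)) U : F U -> Omeet F `<=` U.
Proof. by move=> FU x [W [_ WU] Wx]; exact: WU. Qed.

Lemma Omeet_glb (F : set (set X)) V : open V -> (forall U, F U -> V `<=` U) ->
  V `<=` Omeet F.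
Proof. by move=> oV VU x Vx; exists V. Qed.

Lemma Oimp_open a b : open (Oimp a b).
Proof. by apply: bigcup_open => W []. Qed.

Lemma Oimp_mp a b : Oimp a b `&` a `<=` b.
Proof. by move=> x [[W [_ Wab] Wx] ax]; exact: Wab. Qed.

Lemma Oimp_intro a b W : open W -> W `&` a `<=` b -> W `<=` Oimp a b.
Proof. by move=> oW Wab x Wx; exists W. Qed.

Lemma Opens_sub : sublocale (@Opens X).
Proof.
split => //; first by move=> A _; exact: Omeet_open.
by move=> x s _ _; exact: Oimp_open.
Qed.

Lemma sub_setT S : sublocale S -> S setT.
Proof.
case=> _ hm _.
have -> : [set: X] = Omeet (set0 : set (set X)).
  by apply/seteqP; split => //; apply: Omeet_glb => //; exact: openT.
by apply: hm.
Qed.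

Definition Sp A : set (set X) :=
  [set U | open U /\ forall V, open V -> V `&` A `<=` U -> V `<=` U].

Lemma Sp_sub A : sublocale (Sp A).
Proof.
split; first by move=> U [].
  move=> F FS; split; first exact: Omeet_open.
  move=> V oV VA; apply: Omeet_glb => // U FU.
  have [_ hU] := FS U FU; apply: hU => // x Vx; apply: (Omeet_lb FU); exact: VA.
move=> x s ox [os hs]; split; first exact: Oimp_open.
move=> V oV VA; apply: Oimp_intro => //.
apply: hs; first exact: openI.
move=> y [[Vy xy] Ay]; apply: (@Oimp_mp x s); split => //; exact: VA.
Qed.

Lemma Sp_mono A B : A `<=` B -> Sp A `<=` Sp B.
Proof.
move=> AB U [oU hU]; split => // V oV VB; apply: hU => // x [Vx Ax].
by apply: VB; split => //; exact: AB.
Qed.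

Lemma Opens_Sp_setT : @Opens X `<=` Sp setT.
Proof. by move=> U oU; split => // V _ VU x Vx; exact: VU. Qed.

Definition pts S : set X := [set x | S (~` [set x])].

Lemma sub_Opens S : sublocale S -> S `<=` @Opens X.
Proof. by case. Qed.

Lemma join_sub S T : sublocale S -> sublocale T ->
  sublocale [set W | exists t p, [/\ S t, T p & W = t `&` p]].
Proof.
move=> [SO Sm Si] [TO Tm Ti]; split.
- by move=> W [t [p [St Tp ->]]]; apply: openI; [exact: SO|exact: TO].
- move=> F FJ.
  have /choice[ft hft] : forall W : {W | F W}, exists tp : set X * set X,
      [/\ S tp.1, T tp.2 & sval W = tp.1 `&` tp.2].
    by move=> [W FW]; have [t [p [St Tp e]]] := FJ W FW; exists (t, p).
  pose Ft := [set u | exists W : {W | F W}, u = (ft W).1].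
  pose Fp := [set u | exists W : {W | F W}, u = (ft W).2].
  exists (Omeet Ft), (Omeet Fp); split.
  + by apply: Sm => u [W ->]; have [] := hft W.
  + by apply: Tm => u [W ->]; have [] := hft W.
  + apply/seteqP; split.
    * move=> x Fx; split.
        apply: (Omeet_glb (Omeet_open F)) => // u [W ->].
        have [_ _ e] := hft W; move=> y /(Omeet_lb (proj2_sig W)); rewrite e; by case.
      apply: (Omeet_glb (Omeet_open F)) => // u [W ->].
      have [_ _ e] := hft W; move=> y /(Omeet_lb (proj2_sig W)); rewrite e; by case.
    * apply: Omeet_glb; first by apply: openI; exact: Omeet_open.
      move=> U FU y [yt yp].
      have [_ _ e] := hft (exist _ U FU); rewrite /= in e; rewrite e; split.
        by apply: (Omeet_lb _ yt); exists (exist _ U FU).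
      by apply: (Omeet_lb _ yp); exists (exist _ U FU).
- move=> x W ox [t [p [St Tp ->]]].
  exists (Oimp x t), (Oimp x p); split; [exact: Si|exact: Ti|].
  apply/seteqP; split.
  + move=> y yi; split.
      apply: (Oimp_intro (Oimp_open x (t `&` p))) => // z /Oimp_mp; by case.
    apply: (Oimp_intro (Oimp_open x (t `&` p))) => // z /Oimp_mp; by case.
  + apply: Oimp_intro; first by apply: openI; exact: Oimp_open.
    move=> z [[zt zp] xz]; split.
      by apply: (@Oimp_mp x t); split.
    by apply: (@Oimp_mp x p); split.
Qed.


Lemma join_sublocale I (P : set I) (F : I -> set (set X)) :
  (forall i, P i -> sublocale (F i)) -> sublocale (coS_join P F).
Proof.
move=> hF; split.
- by move=> W [].
- move=> A AJ; split; first exact: Omeet_open.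
  move=> i Pi; have [_ hm _] := hF i Pi; apply: hm => W AW.
  by have [_ h] := AJ W AW; exact: h.
- move=> x s ox [os hs]; split; first exact: Oimp_open.
  move=> i Pi; have [_ _ hi] := hF i Pi; apply: hi => //; exact: hs.
Qed.

Lemma join_le I (P : set I) (F G : I -> set (set X)) :
  (forall i, P i -> exists2 j, P j & F j `<=` G i) ->
  coS_join P F `<=` coS_join P G.
Proof.
move=> h W [oW hW]; split => // i Pi; have [j Pj FG] := h i Pi.
by apply: FG; exact: hW.
Qed.

Variable hT : accessible_space X.

Lemma open_C1 (x : X) : open (~` [set x]).
Proof. by rewrite openC; exact: accessible_closed_set1. Qed.

Lemma pts_Sp A : pts (Sp A) = A.
Proof.
apply/seteqP; split => x.
- move=> [_ h]; apply/not_notP => nAx.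
  have : [set: X] `<=` ~` [set x].
    by apply: h; [exact: openT| move=> y [_ Ay] yx; apply: nAx; rewrite -yx].
  by move=> /(_ x I); apply.
- move=> Ax; split; first exact: open_C1.
  move=> V oV VA y Vy yx; rewrite yx in Vy.
  by have := VA x (conj Vy Ax); apply.
Qed.

Lemma Sp_le S A : sublocale S -> A `<=` pts S -> Sp A `<=` S.
Proof.
move=> sS AS U [oU hU].
pose F := [set W | exists x, [/\ A x, ~ U x & W = ~` [set x]]].
have FS : F `<=` S by move=> W [x [Ax _ ->]]; exact: AS.
have -> : U = Omeet F.
  apply/seteqP; split.
    apply: Omeet_glb => // W [x [Ax nUx ->]] y Uy yx; apply: nUx; by rewrite -yx.
  apply: hU; first exact: Omeet_open.
  move=> y [Oy Ay]; apply/not_notP => nUy.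
  have : F (~` [set y]) by exists y.
  by move=> /Omeet_lb /(_ y Oy); apply.
by case: sS => _ hm _; exact: hm.
Qed.

Lemma meet_full S T : sublocale S -> sublocale T ->
  (forall x, pts S x \/ pts T x) -> coS_meet S T = @Opens X.
Proof.
move=> sS sT h; apply/seteqP; split.
- move=> W hW; apply: hW; split; first exact: Opens_sub.
  by move=> U [SU|TU]; [exact: sub_Opens sS _ SU|exact: sub_Opens sT _ TU].
- move=> W oW U [sU STU]; apply: (Sp_le sU); last exact: Opens_Sp_setT.
  by move=> x _; case: (h x) => hx; apply: STU; [left|right].
Qed.

Lemma C1_eq (x : X) q : ~` [set x] `<=` q -> ~ q x -> q = ~` [set x].
Proof.
move=> sq nq; apply/seteqP; split => // y qy yx; apply: nq; by rewrite -yx.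
Qed.

Lemma meet_pts S T : sublocale S -> sublocale T ->
  coS_meet S T = @Opens X -> forall x, pts S x \/ pts T x.
Proof.
move=> sS sT E x.
have : coS_meet S T (~` [set x]) by rewrite E; exact: open_C1.
move=> /(_ [set W | exists t p, [/\ S t, T p & W = t `&` p]]).
case.
  split; first exact: join_sub.
  move=> W [SW|TW].
    by exists W, setT; split => //; [exact: sub_setT|rewrite setIT].
  by exists setT, W; split => //; [exact: sub_setT|rewrite setTI].
move=> t [p [St Tp e]].
have tsub : ~` [set x] `<=` t by rewrite e => y [].
have psub : ~` [set x] `<=` p by rewrite e => y [].
have [tx|ntx] := pselect (t x).
  have [px|npx] := pselect (p x).
    have : (t `&` p) x by [].
    by rewrite -e => /(_ erefl).
  by right; move: Tp; rewrite (C1_eq psub npx).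
by left; move: St; rewrite (C1_eq tsub ntx).
Qed.

Lemma pc_Sp T : sublocale T -> coS_pc T = Sp (~` pts T).
Proof.
move=> sT; apply/seteqP; split.
- move=> W [oW hW]; apply: hW; split; first exact: Sp_sub.
  apply: meet_full => //; first exact: Sp_sub.
  move=> x; have [h|h] := pselect (pts T x).
    by left.
  by right; rewrite pts_Sp.
- move=> W SpW; split; first exact: (sub_Opens (Sp_sub _) SpW).
  move=> P [sP mP]; apply: (Sp_le sP) SpW => x nTx.
  by case: (meet_pts sT sP mP x).
Qed.

Lemma pts_join I (P : set I) (F : I -> set (set X)) x :
  pts (coS_join P F) x <-> (forall i, P i -> pts (F i) x).
Proof.
split; first by move=> [_ h].
by move=> h; split => //; exact: open_C1.
Qed.

Lemma pts_mono S T : S `<=` T -> pts S `<=` pts T.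
Proof. by move=> ST x; exact: ST. Qed.

End Frame.


Section Real.
Local Open Scope classical_set_scope.
Local Open Scope ring_scope.

Lemma rat_between (r t : rat) : r < t -> exists s, r < s /\ s < t.
Proof. move=> h; exists ((r + t) / 2); split; lra. Qed.

Variable R : realType.

Definition qE (q : rat) : \bar R := (ratr q)%:E.

Lemma qE_lt r s : (qE r < qE s)%E = (r < s).
Proof. by rewrite /qE lte_fin ltr_rat. Qed.
Lemma qE_le r s : (qE r <= qE s)%E = (r <= s).
Proof. by rewrite /qE lee_fin ler_rat. Qed.

Lemma ereal_dense (a b : \bar R) : (a < b)%E -> exists q, (a < qE q)%E /\ (qE q < b)%E.
Proof.
move=> ab.
have [r1 [r2 [a1 r12 b2]]] : exists r1 r2 : R, [/\ (a <= r1%:E)%E, r1 < r2 & (r2%:E <= b)%E].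
  move: ab; case: a => [x| |]; case: b => [y| |] //=.
  - by move=> xy; exists x, y; split => //; rewrite -lte_fin.
  - by move=> _; exists x, (x + 1); split => //; [lra|exact: leey].
  - by move=> _; exists (y - 1), y; split => //; [exact: leNye|lra].
  - by move=> _; exists 0, 1; split => //; [exact: leNye|exact: leey].
have [q] := rat_in_itvoo r12; rewrite in_itv /= => /andP[h1 h2].
exists q; split.
  by apply: (le_lt_trans a1); rewrite /qE lte_fin.
by apply: (lt_le_trans _ b2); rewrite /qE lte_fin.
Qed.

Variable X : topologicalType.
Variable hT : accessible_space X.

Definition phi (f : X -> \bar R) : FbarL X :=
  (fun r => coS_join [set s | r < s] (fun s => Sp [set x | (f x <= qE s)%E]),
   fun s => coS_join [set r | r < s] (fun r => Sp [set x | (qE r <= f x)%E])).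

Lemma pts_phi1 f r : pts ((phi f).1 r) = [set x | (f x <= qE r)%E].
Proof.
apply/seteqP; split => x.
- move/(pts_join hT) => h; rewrite /= leNgt; apply/negP => /ereal_dense [q [rq qf]].
  have := h q; rewrite pts_Sp //=; rewrite -qE_lt => /(_ rq) fq.
  by move: (le_lt_trans fq qf); rewrite ltxx.
- move=> /= fr; apply/(pts_join hT) => s rs; rewrite pts_Sp //=.
  by apply: (le_trans fr); rewrite qE_le ltW.
Qed.

Lemma pts_phi2 f s : pts ((phi f).2 s) = [set x | (qE s <= f x)%E].
Proof.
apply/seteqP; split => x.
- move/(pts_join hT) => h; rewrite /= leNgt; apply/negP => /ereal_dense [q [fq qs]].
  have := h q; rewrite pts_Sp //=; rewrite -qE_lt => /(_ qs) qf.
  by move: (le_lt_trans qf fq); rewrite ltxx.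
- move=> /= fr; apply/(pts_join hT) => r rs; rewrite pts_Sp //=.
  by apply: le_trans fr; rewrite qE_le ltW.
Qed.

Lemma meetC (S T : set (set X)) : coS_meet S T = coS_meet T S.
Proof. by rewrite /coS_meet setUC. Qed.

Lemma phi_is f : is_FbarL (phi f).
Proof.
split.
- split => r; apply: join_sublocale => s _; exact: Sp_sub.
- move=> r s sr; rewrite /coS_bot; apply: meet_full.
  + apply: join_sublocale => ? _; exact: Sp_sub.
  + apply: join_sublocale => ? _; exact: Sp_sub.
  + move=> x; rewrite pts_phi1 pts_phi2 /=.
    have [h|h] := leP (f x) (qE r); [by left|right].
    by apply: le_trans (ltW h); rewrite qE_le.
- move=> r; apply/seteqP; split => W [oW hW].
  + split => // s rs; split => // t st; apply: hW; exact: lt_trans st.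
  + split => // t rt; have [s [rs st]] := rat_between rt.
    by have [_ h] := hW s rs; exact: h.
- move=> s; apply/seteqP; split => W [oW hW].
  + split => // r rs; split => // t tr; apply: hW; exact: lt_trans tr _.
  + split => // t ts; have [r [tr rs]] := rat_between ts.
    by have [_ h] := hW r rs; exact: h.
- move=> r s rs; have [t [rt ts]] := rat_between rs; split.
  + rewrite /coS_le (pc_Sp hT); last by apply: join_sublocale => ? _; exact: Sp_sub.
    move=> W [oW hW]; apply: (Sp_mono _ (hW t ts)) => x /= tf.
    rewrite pts_phi1 /= => fr.
    by move: (le_trans tf fr); rewrite qE_le leNgt rt.
  + rewrite /coS_le (pc_Sp hT); last by apply: join_sublocale => ? _; exact: Sp_sub.
    move=> W [oW hW]; apply: (Sp_mono _ (hW t rt)) => x /= ft.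
    rewrite pts_phi2 /= => sf.
    by move: (le_trans sf ft); rewrite qE_le leNgt ts.
Qed.

Lemma phi_le f g : Fbar_le f g <-> FbarL_le (phi f) (phi g).
Proof.
split.
- move=> fg; split => r; rewrite /coS_le; apply: join_le => s rs; exists s => //;
    apply: Sp_mono => x /=.
  + exact: le_trans.
  + by move=> h; apply: le_trans h _.
- move=> [h1 _] x; rewrite leNgt; apply/negP => /ereal_dense [q [gq qf]].
  have := pts_mono (h1 q); rewrite !pts_phi1 => /(_ x (ltW gq)) /= fq.
  by move: (le_lt_trans fq qf); rewrite ltxx.
Qed.

Lemma Sp_pt (A : set X) x : Sp A (~` [set x]) <-> A x.
Proof. by have := pts_Sp hT A; move/seteqP => [h1 h2]; split; [exact: h1|exact: h2]. Qed.

Lemma phi_surj h : is_FbarL h -> exists g, phi g = h.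
Proof.
case: h => h1 h2 [[s1 s2] r1 r3 r4 pcc] /=.
rewrite /= in s1 s2 r1 r3 r4 pcc.
pose P r := pts (h1 r). pose Q s := pts (h2 s).
pose g x := ereal_inf [set qE r | r in [set r | P r x]].
have mono1 r t : r < t -> h1 r `<=` h1 t.
  by move=> rt; rewrite (r3 r) => W [_ hW]; exact: hW.
have ha r s : r < s -> h1 r `<=` coS_pc (h2 s) by move=> rs; case: (pcc r s rs).
have ha' r s : r < s -> h2 s `<=` coS_pc (h1 r) by move=> rs; case: (pcc r s rs).
have hb s : coS_pc (h2 s) `<=` h1 s.
  move=> W [_ hW]; apply: hW; split => //; rewrite meetC; exact: r1.
have hb' r : coS_pc (h1 r) `<=` h2 r.
  move=> W [_ hW]; apply: hW; split => //; exact: r1.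
have PQ1 r s x : r < s -> P r x -> ~ Q s x.
  move=> rs Prx; have := ha r s rs (~` [set x]) Prx.
  by rewrite (pc_Sp hT (s2 s)) => /Sp_pt.
have PQ2 s x : ~ Q s x -> P s x.
  move=> nQ; apply: (hb s); rewrite (pc_Sp hT (s2 s)).
  exact/Sp_pt.
have G1 r x : P r x -> (g x <= qE r)%E.
  by move=> Prx; apply: ereal_inf_lbound; exists r.
have G2 t x : (g x < qE t)%E -> P t x.
  move=> /ereal_inf_lt [_ [r Prx <-]]; rewrite qE_lt => rt.
  exact: (mono1 r t rt).
have E1 r : h1 r = coS_join [set s | r < s] (fun s => Sp (~` Q s)).
  apply/seteqP; split.
    move=> W hW; split; first exact: (sub_Opens (s1 r) hW).
    by move=> s rs; rewrite -(pc_Sp hT (s2 s)); exact: (ha r s rs W hW).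
  move=> W [oW hW]; rewrite (r3 r); split => // s rs.
  by apply: hb; rewrite (pc_Sp hT (s2 s)); exact: hW.
have E2 s : h2 s = coS_join [set r | r < s] (fun r => Sp (~` P r)).
  apply/seteqP; split.
    move=> W hW; split; first exact: (sub_Opens (s2 s) hW).
    by move=> r rs; rewrite -(pc_Sp hT (s1 r)); exact: (ha' r s rs W hW).
  move=> W [oW hW]; rewrite (r4 s); split => // r rs.
  by apply: hb'; rewrite (pc_Sp hT (s1 r)); exact: hW.
exists g; rewrite /phi; congr pair; apply/funext => r; apply/seteqP; split.
- rewrite E1; apply: join_le => s rs.
  have [j [rj js]] := rat_between rs; have [k [jk ks]] := rat_between js.
  exists j => //; apply: Sp_mono => x /= gj; apply: (PQ1 k s) => //.
  by apply: G2; apply: (le_lt_trans gj); rewrite qE_lt.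
- rewrite E1; apply: join_le => s rs; exists s => //; apply: Sp_mono => x /= nQ.
  exact/G1/PQ2.
- rewrite E2; apply: join_le => s rs.
  have [j [rj js]] := rat_between rs.
  exists j => //; apply: Sp_mono => x /= jg Psx.
  by have := le_trans jg (G1 _ _ Psx); rewrite qE_le leNgt rj.
- rewrite E2; apply: join_le => s rs; exists s => //; apply: Sp_mono => x /= nP.
  by rewrite leNgt; apply/negP => /G2.
Qed.

Lemma phi_top : phi (fun _ => +oo%E) = FbarL_pinfty X.
Proof.
rewrite /phi /FbarL_pinfty; congr pair; apply/funext => r; apply/seteqP; split.
- move=> W [oW hW]; have : r < r + 1 by lra.
  move=> /hW [_ h]; rewrite /coS_top /=; apply/seteqP; split => //.
  by apply: h; [exact: openT| move=> y [_]; rewrite leye_eq].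
- move=> W /= ->; split; first exact: openT.
  by move=> s _; split; [exact: openT|move=> V _ _].
- by move=> W [].
- move=> W oW; split => // s _; split => // V oV VA y Vy; apply: VA; split => //.
  exact: leey.
Qed.

Lemma phi_bot : phi (fun _ => -oo%E) = FbarL_minfty X.
Proof.
rewrite /phi /FbarL_minfty; congr pair; apply/funext => r; apply/seteqP; split.
- by move=> W [].
- move=> W oW; split => // s _; split => // V oV VA y Vy; apply: VA; split => //.
  exact: leNye.
- move=> W [oW hW]; have : r - 1 < r by lra.
  move=> /hW [_ h]; rewrite /coS_top /=; apply/seteqP; split => //.
  by apply: h; [exact: openT| move=> y [_]; rewrite leeNy_eq].
- move=> W /= ->; split; first exact: openT.
  by move=> s _; split; [exact: openT|move=> V _ _].
Qed.
End Real.

Unset Implicit Arguments.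

Theorem mainTheorem14 (R : realType) (X : topologicalType) :
  accessible_space X ->
  poset_iso (fun _ : X -> \bar R => True) (@Fbar_le R X)
            (@is_FbarL X) (@FbarL_le X) /\
  poset_iso (fun _ : X -> R => True) (@F_le R X)
            (@is_FL X) (@FbarL_le X).
Proof.
move=> hT.
have PI := @phi_is R X hT.
have PL := @phi_le R X hT.
have PS := @phi_surj R X hT.
have PT := @phi_top R X.
have PB := @phi_bot R X.
split.
- exists (@phi R X); split.
  + by move=> f _; exact: PI.
  + by move=> h hh; have [g <-] := PS h hh; exists g.
  + by move=> f g _ _; exact: PL.
- exists (fun f => @phi R X (fun x => (f x)%:E)); split.
  + move=> f _; split; first exact: PI.
    move=> g hg; have [g' <-] := PS g hg; split.
    * move=> [_ _ _ hleast].
      suff -> : g' = (fun _ => +oo%E) by rewrite PT.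
      apply/funext => x; apply/eqP; rewrite -leye_eq; apply/negP => hx.
      pose k := fun y => if y == x then Order.max (f x)%:E (g' x) else +oo%E.
      have := hleast (phi k) (PI _).
      have /[swap] /[apply] : FbarL_le (phi (fun x => (f x)%:E)) (phi k).
        apply/PL => y; rewrite /k; case: eqP => [->|_]; last exact: leey.
        by rewrite le_max lexx.
      have /[swap] /[apply] : FbarL_le (phi g') (phi k).
        apply/PL => y; rewrite /k; case: eqP => [->|_]; last exact: leey.
        by rewrite le_max lexx orbT.
      rewrite -PT => /PL /(_ x); rewrite /k eqxx le_max !leye_eq.
      by case/orP => // /eqP; move: hx; rewrite leye_eq => /eqP.
    * move=> [_ _ _ hgreat].
      suff -> : g' = (fun _ => -oo%E) by rewrite PB.
      apply/funext => x; apply/eqP; rewrite -leeNy_eq; apply/negP => hx.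
      pose k := fun y => if y == x then Order.min (f x)%:E (g' x) else -oo%E.
      have := hgreat (phi k) (PI _).
      have /[swap] /[apply] : FbarL_le (phi k) (phi (fun x => (f x)%:E)).
        apply/PL => y; rewrite /k; case: eqP => [->|_]; last exact: leNye.
        by rewrite ge_min lexx.
      have /[swap] /[apply] : FbarL_le (phi k) (phi g').
        apply/PL => y; rewrite /k; case: eqP => [->|_]; last exact: leNye.
        by rewrite ge_min lexx orbT.
      rewrite -PB => /PL /(_ x); rewrite /k eqxx ge_min !leeNy_eq.
      by case/orP => // /eqP; move: hx; rewrite leeNy_eq => /eqP.
  + move=> h [hh hF]; have [g' eg] := PS h hh.
    have fin : forall x, g' x \is a fin_num.
      move=> x; case E : (g' x) => [r| |] //; exfalso.
      * pose k : X -> \bar R := fun y => if y == x then -oo%E else +oo%E.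
        have [+ _] := hF (phi k) (PI _).
        have J : FbarL_is_join h (phi k) (FbarL_pinfty X).
          rewrite -eg -PT; split; first exact: PI.
          - by apply/PL => y; exact: leey.
          - by apply/PL => y; exact: leey.
          move=> k0 hk0; have [k' <-] := PS k0 hk0.
          move=> /PL h1 /PL h2; apply/PL => y.
          case: (eqVneq y x) => [->|yx].
            by have := h1 x; rewrite E.
          by have := h2 y; rewrite /k (negbTE yx).
        move=> /(_ J) e.
        have : FbarL_le (phi (fun _ : X => (+oo : \bar R)%E)) (phi k).
          by rewrite e -PT; apply/PL => y; exact: lexx.
        by move=> /PL /(_ x); rewrite /k eqxx.
      * pose k : X -> \bar R := fun y => if y == x then +oo%E else -oo%E.
        have [_ +] := hF (phi k) (PI _).
        have J : FbarL_is_meet h (phi k) (FbarL_minfty X).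
          rewrite -eg -PB; split; first exact: PI.
          - by apply/PL => y; exact: leNye.
          - by apply/PL => y; exact: leNye.
          move=> k0 hk0; have [k' <-] := PS k0 hk0.
          move=> /PL h1 /PL h2; apply/PL => y.
          case: (eqVneq y x) => [->|yx].
            by have := h1 x; rewrite E.
          by have := h2 y; rewrite /k (negbTE yx).
        move=> /(_ J) e.
        have : FbarL_le (phi k) (phi (fun _ : X => (-oo : \bar R)%E)).
          by rewrite e -PB; apply/PL => y; exact: lexx.
        by move=> /PL /(_ x); rewrite /k eqxx.
    exists (fun x => fine (g' x)) => //; rewrite -eg; congr phi.
    by apply/funext => x; exact: fineK.
  + move=> f f' _ _; rewrite -PL; split => hf x.
      by rewrite lee_fin; exact: hf.
    by have := hf x; rewrite lee_fin.
Qed.
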